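(* Let $d\in\mathbb N$, $\alpha\in\mathbb R_+^d$, and let $D\subset\mathbb R_+^d$ be a nonempty convex compact set. Then $$\inf_{x\in[0,1]^d}\max_{y\in D}\frac{y^\top x}{\alpha^\top x}=\max_{y\in D}\min_{i\in[d]}\frac{y_i}{\alpha_i}.$$ Moreover, the same equality holds with $\inf_{x\in[0,1]^d}$ replaced by $\inf_{x\in\mathbb R_+^d}$.
   Context: Every ratio whose denominator equals zero is defined to be $+\infty$; this applies both to $\frac{y^\top x}{\alpha^\top x}$ when $\alpha^\top x=0$ and to $\frac{y_i}{\alpha_i}$ when $\alpha_i=0$. *)

(* Defs.v *)
From HB Require Import structures.
From mathcomp Require Import all_boot all_order all_algebra.
From mathcomp Require Import all_classical all_reals all_analysis.
Set Implicit Arguments. Unset Strict Implicit. Unset Printing Implicit Defensive.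
Import Order.TTheory GRing.Theory Num.Theory numFieldNormedType.Exports.
Local Open Scope classical_set_scope.
Local Open Scope ring_scope.

Definition dotv (R : realType) (d : nat) (u v : 'rV[R]_d) : R :=
  \sum_(i < d) u 0 i * v 0 i.

Definition eratio (R : realType) (a b : R) : \bar R :=
  if b == 0 then +oo%E else (a / b)%:E.

Definition nonneg_vec (R : realType) (d : nat) (v : 'rV[R]_d) : Prop :=
  forall i, 0 <= v 0 i.

Definition unit_box (R : realType) (d : nat) : set 'rV[R]_d :=
  [set x | forall i, 0 <= x 0 i <= 1].

Definition convex_set_rV (R : realType) (d : nat) (D : set 'rV[R]_d) : Prop :=
  forall x y, D x -> D y -> forall t : R, 0 <= t <= 1 ->
    D (t *: x + (1 - t) *: y).

Definition inner_max (R : realType) (d : nat) (D : set 'rV[R]_d)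
    (alpha x : 'rV[R]_d) : \bar R :=
  ereal_sup [set eratio (dotv y x) (dotv alpha x) | y in D].

Definition rhs_value (R : realType) (d : nat) (D : set 'rV[R]_d)
    (alpha : 'rV[R]_d) : \bar R :=
  ereal_sup [set ereal_inf [set eratio (y 0 i) (alpha 0 i) | i in [set: 'I_d]]
            | y in D].

(* Main.v *)
Require Import Defs.
From HB Require Import structures.
From mathcomp Require Import all_boot all_order all_algebra.
From mathcomp Require Import all_classical all_reals all_analysis.
From mathcomp Require Import ring lra.
Import Order.TTheory GRing.Theory Num.Theory numFieldNormedType.Exports.
Local Open Scope classical_set_scope.
Local Open Scope ring_scope.
Set Implicit Arguments. Unset Strict Implicit.

Lemma term_ineq (R : realType) (a h s : R) :
  (Num.max 0 (a - s * h)) ^+ 2 <=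
  (Num.max 0 a) ^+ 2 - 2 * s * h * (Num.max 0 a) + s ^+ 2 * h ^+ 2.
Proof.
rewrite !maxr_absE !sub0r !normrN.
case: (ger0P a) => ha; case: (ger0P (a - s * h)) => hb; nra.
Qed.

Lemma dotvZ (R : realType) d (y x : 'rV[R]_d) (c : R) :
  dotv y (c *: x) = c * dotv y x.
Proof.
rewrite /dotv mulr_sumr; apply: eq_bigr => i _; rewrite mxE; ring.
Qed.

Lemma dotv_ge0 (R : realType) d (y x : 'rV[R]_d) :
  nonneg_vec y -> nonneg_vec x -> 0 <= dotv y x.
Proof. by move=> hy hx; apply: sumr_ge0 => i _; apply: mulr_ge0. Qed.

Lemma small_c (R : realType) (c K : R) : 0 <= K ->
  (forall s, 0 < s -> s <= 1 -> 2 * s * c <= s ^+ 2 * K) -> c <= 0.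
Proof.
move=> K0 H; rewrite leNgt; apply/negP => c0.
pose s := Num.min 1 (c / (K + 1)).
have s0 : 0 < s by rewrite lt_min ltr01 divr_gt0 // ltr_wpDl.
have s1 : s <= 1 by rewrite ge_min lexx.
have s2 : s * (K + 1) <= c.
  by rewrite -ler_pdivlMr ?ltr_wpDl // ge_min lexx orbT.
have := H s s0 s1; nra.
Qed.

Lemma f_cont (R : realType) d (alpha : 'rV[R]_d) (t : R) :
  continuous (fun y : 'rV[R]_d =>
    \sum_(i < d) (Num.max 0 (t * alpha 0 i - y 0 i)) ^+ 2).
Proof.
apply: (@continuous_big _ _ +%R 0 xpredT add_continuous) => i _.
move=> y.
have hg : continuous (fun y : 'rV[R]_d => Num.max 0 (t * alpha 0 i - y 0 i)).
  move=> z.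
  apply: (@continuous_max R _ (fun _ => 0) (fun y : 'rV[R]_d => t * alpha 0 i - y 0 i)).
    exact: cst_continuous.
  apply: (@continuousB R R^o); first exact: cst_continuous.
  exact: coord_continuous.
have -> : (fun y : 'rV[R]_d => Num.max 0 (t * alpha 0 i - y 0 i) ^+ 2) =
  ((fun y : 'rV[R]_d => Num.max 0 (t * alpha 0 i - y 0 i)) \* (fun y : 'rV[R]_d => Num.max 0 (t * alpha 0 i - y 0 i))).
  by apply: funext => z /=; rewrite expr2.
exact: (continuousM (hg y) (hg y)).
Qed.

Lemma key (R : realType) d (alpha : 'rV[R]_d) (D : set 'rV[R]_d) (t : R) :
  D !=set0 -> convex_set_rV D -> compact D ->
  (forall y, D y -> exists i, y 0 i < t * alpha 0 i) ->
  exists x : 'rV[R]_d, nonneg_vec x /\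
    forall y, D y -> dotv y x < t * dotv alpha x.
Proof.
move=> D0 cD kD hD.
pose f := fun y : 'rV[R]_d =>
  \sum_(i < d) (Num.max 0 (t * alpha 0 i - y 0 i)) ^+ 2.
have [y0 y0D miny0] := @compact_EVT_min _ R f D D0 kD
  (@continuous_subspaceT _ _ D f (@f_cont R d alpha t)).
rewrite inE in y0D.
pose x := \row_i Num.max 0 (t * alpha 0 i - y0 0 i).
have xE i : x 0 i = Num.max 0 (t * alpha 0 i - y0 0 i) by rewrite mxE.
have x0 i : 0 <= x 0 i by rewrite xE le_max lexx.
exists x; split; first by [].
have key1 y : D y -> \sum_i x 0 i * (y 0 i - y0 0 i) <= 0.
  move=> yD; apply: (@small_c R _ (\sum_i (y 0 i - y0 0 i) ^+ 2)).
    by apply: sumr_ge0 => i _; apply: sqr_ge0.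
  move=> s s0 s1.
  have ysD : D (s *: y + (1 - s) *: y0) by apply: cD => //; rewrite (ltW s0) s1.
  have := miny0 _ (mem_set ysD).
  have : f (s *: y + (1 - s) *: y0) <= \sum_i (x 0 i ^+ 2 -
      2 * s * (y 0 i - y0 0 i) * x 0 i + s ^+ 2 * (y 0 i - y0 0 i) ^+ 2).
    apply: ler_sum => i _; rewrite !mxE.
    have -> : t * alpha 0 i - (s * y 0 i + (1 - s) * y0 0 i) =
      (t * alpha 0 i - y0 0 i) - s * (y 0 i - y0 0 i) by ring.
    exact: term_ineq.
  rewrite big_split sumrB /= -mulr_sumr.
  have -> : f y0 = \sum_i x 0 i ^+ 2 by apply: eq_bigr => i _; rewrite xE.
  have -> : \sum_i 2 * s * (y 0 i - y0 0 i) * x 0 i =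
     2 * s * \sum_i x 0 i * (y 0 i - y0 0 i).
    by rewrite mulr_sumr; apply: eq_bigr => i _; ring.
  lra.
have pos : 0 < \sum_i x 0 i ^+ 2.
  have [i hi] := hD y0 y0D.
  rewrite (bigD1 i) //=; apply: ltr_pwDl; last first.
    by apply: sumr_ge0 => j _; apply: sqr_ge0.
  rewrite xE; apply: exprn_gt0; rewrite lt_max; apply/orP; right; lra.
have eq0 : \sum_i x 0 i * (y0 0 i - t * alpha 0 i) = - \sum_i x 0 i ^+ 2.
  rewrite -sumrN; apply: eq_bigr => i _; rewrite xE maxr_absE sub0r normrN.
  by case: (ger0P (t * alpha 0 i - y0 0 i)) => h; field.
move=> y yD.
have := key1 y yD.
have -> : dotv y x = \sum_i x 0 i * (y 0 i - y0 0 i) +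
    \sum_i x 0 i * (y0 0 i - t * alpha 0 i) + t * dotv alpha x.
  rewrite /dotv mulr_sumr -!big_split; apply: eq_bigr => i _ /=; ring.
lra.
Qed.

Lemma ratio_ge0 (R : realType) (a b : R) : 0 <= a -> 0 <= b ->
  (0 <= eratio a b)%E.
Proof.
move=> a0 b0; rewrite /eratio; case: eqP => _; first exact: leey.
by rewrite lee_fin divr_ge0.
Qed.

Lemma m_ge0 (R : realType) d (alpha y : 'rV[R]_d) :
  nonneg_vec alpha -> nonneg_vec y ->
  (0 <= ereal_inf [set eratio (y 0%R i) (alpha 0%R i) | i in [set: 'I_d]])%E.
Proof.
move=> ha hy; apply: le_ereal_inf_tmp => _ [i _ <-]; exact: ratio_ge0.
Qed.

Lemma rhs_ge0 (R : realType) d (alpha : 'rV[R]_d) (D : set 'rV[R]_d) :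
  nonneg_vec alpha -> D !=set0 -> (forall y, D y -> nonneg_vec y) ->
  (0 <= rhs_value D alpha)%E.
Proof.
move=> ha [y yD] hD; apply: le_ereal_sup_tmp.
exists (ereal_inf [set eratio (y 0%R i) (alpha 0%R i) | i in [set: 'I_d]]).
  by exists y.
by apply: m_ge0 => //; apply: hD.
Qed.

Lemma lower (R : realType) d (alpha : 'rV[R]_d) (D : set 'rV[R]_d) x :
  nonneg_vec alpha -> (forall y, D y -> nonneg_vec y) -> nonneg_vec x ->
  (rhs_value D alpha <= inner_max D alpha x)%E.
Proof.
move=> ha hD hx; apply: ge_ereal_sup => _ [y yD <-].
rewrite /inner_max; apply: le_ereal_sup_tmp.
exists (eratio (dotv y x) (dotv alpha x)); first by exists y.
rewrite /eratio; case: eqP => hax; first exact: leey.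
have ax0 : 0 < dotv alpha x.
  by rewrite lt_neqAle eq_sym; apply/andP; split; [apply/eqP | apply: dotv_ge0].
have [i ai] : exists i, alpha 0 i != 0.
  apply: contrapT => hn; apply: hax; rewrite /dotv big1 // => i _.
  have /eqP -> : alpha 0 i == 0 by apply: contrapT => hi; apply: hn; exists i; apply/negP.
  by rewrite mul0r.
set m := ereal_inf _.
have hmi : (m <= (y 0%R i / alpha 0%R i)%:E)%E.
  apply: ereal_inf_lbound; exists i => //; by rewrite /eratio (negbTE ai).
have m0 : (0 <= m)%E by apply: m_ge0 => //; apply: hD.
case Em: m hmi m0 => [mu| |] //= _ mu0.
have hj j : mu * alpha 0 j <= y 0 j.
  have [aj|aj] := eqVneq (alpha 0 j) 0; first by rewrite aj mulr0; apply: hD.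
  have : (m <= eratio (y 0%R j) (alpha 0%R j))%E by apply: ereal_inf_lbound; exists j.
  rewrite Em /eratio (negbTE aj) lee_fin.
  have aj0 : 0 < alpha 0 j by rewrite lt_neqAle eq_sym aj ha.
  by rewrite ler_pdivlMr.
rewrite lee_fin ler_pdivlMr // /dotv mulr_sumr; apply: ler_sum => j _.
rewrite mulrA; apply: ler_wpM2r => //.
Qed.

Lemma upper (R : realType) d (alpha : 'rV[R]_d) (D : set 'rV[R]_d) :
  nonneg_vec alpha ->
  D !=set0 -> convex_set_rV D -> compact D ->
  (forall y, D y -> nonneg_vec y) ->
  (ereal_inf [set inner_max D alpha x | x in @unit_box R d]
     <= rhs_value D alpha)%E.
Proof.
move=> ha D0 cD kD hD.
have r0 := rhs_ge0 ha D0 hD.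
apply/lee_addgt0Pr => e e0.
case Er: (rhs_value D alpha) r0 => [s| |] //= s0; last by rewrite leey.
rewrite lee_fin in s0.
pose t := s + e.
have hD' y : D y -> exists i, y 0 i < t * alpha 0 i.
  move=> yD; apply: contrapT => hn.
  have hi i : t * alpha 0 i <= y 0 i.
    by rewrite leNgt; apply/negP => hi; apply: hn; exists i.
  have : (t%:E <= rhs_value D alpha)%E.
    apply: le_ereal_sup_tmp.
    exists (ereal_inf [set eratio (y 0%R i) (alpha 0%R i) | i in [set: 'I_d]]).
      by exists y.
    apply: le_ereal_inf_tmp => _ [i _ <-]; rewrite /eratio.
    case: eqP => ai; first exact: leey.
    have aj0 : 0 < alpha 0 i by rewrite lt_neqAle eq_sym ha andbT; apply/eqP.
    by rewrite lee_fin ler_pdivlMr.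
  rewrite Er lee_fin /t; lra.
have [x [hx hxy]] := key D0 cD kD hD'.
pose S := 1 + \sum_i x 0 i.
have Sx0 : 0 <= \sum_i x 0 i by apply: sumr_ge0.
have S0 : 0 < S by rewrite /S; lra.
pose x' := S^-1 *: x.
apply: ge_ereal_inf; exists (inner_max D alpha x').
  exists x' => // i; rewrite mxE; apply/andP; split.
    by apply: mulr_ge0 => //; rewrite invr_ge0 ltW.
  rewrite mulrC ler_pdivrMr // mul1r /S.
  rewrite (bigD1 i) //=.
  have : 0 <= \sum_(j < d | j != i) x 0 j by apply: sumr_ge0.
  lra.
apply: ge_ereal_sup => _ [y yD <-].
have hy := hxy y yD.
have yx0 : 0 <= dotv y x by apply: dotv_ge0 => //; apply: hD.
have ax0 : 0 <= dotv alpha x by apply: dotv_ge0.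
have axp : 0 < dotv alpha x.
  rewrite lt_neqAle ax0 andbT; apply/eqP => h; move: hy; rewrite -h; lra.
rewrite /eratio !dotvZ.
have -> : (S^-1 * dotv alpha x == 0) = false.
  by apply/negbTE; rewrite mulf_neq0 // ?invr_eq0 gt_eqF.
rewrite lee_fin ler_pdivrMr; last by apply: mulr_gt0; rewrite ?invr_gt0.
rewrite /t; have : 0 < S^-1 by rewrite invr_gt0.
move=> Sp; rewrite mulrCA; apply: ler_wpM2l; [exact: ltW | exact: ltW hy].
Qed.

Theorem mainTheorem4 (R : realType) (d : nat) (alpha : 'rV[R]_d)
    (D : set 'rV[R]_d) :
  nonneg_vec alpha ->
  D !=set0 -> convex_set_rV D -> compact D ->
  (forall y, D y -> nonneg_vec y) ->
  ereal_inf [set inner_max D alpha x | x in @unit_box R d] = rhs_value D alpha /\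
  ereal_inf [set inner_max D alpha x | x in [set x | nonneg_vec x]]
    = rhs_value D alpha.
Proof.
move=> ha D0 cD kD hD.
have up := upper ha D0 cD kD hD.
have sub : (ereal_inf [set inner_max D alpha x | x in [set x | nonneg_vec x]]
   <= ereal_inf [set inner_max D alpha x | x in @unit_box R d])%E.
  apply: ereal_inf_le_tmp => _ [x hx <-]; exists x => //= i.
  by have /andP[] := hx i.
have lo : (rhs_value D alpha <=
    ereal_inf [set inner_max D alpha x | x in [set x | nonneg_vec x]])%E.
  by apply: le_ereal_inf_tmp => _ [x hx <-]; apply: lower.
split; apply/eqP; rewrite eq_le; apply/andP; split => //.
- exact: le_trans lo sub.
- exact: le_trans sub up.
Qed.
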